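(* Let $W$ be a cocompact discrete reflection group of a CAT(0) space $X$, let $C$ be a chamber, and let $S$ be a minimal subset of the set $R$ of reflections in $W$ such that $C=\bigcap_{s\in S}X_s^+$. Let $w\in W$, let $w=s_1\cdots s_l$ be a reduced representation ($s_i\in S$, $l=\ell(w)$), and let $T=\{s_1,\dots,s_l\}$. Then $$\overline{C}\cap w\overline{C}=\bigcap_{t\in T}(F_t\cap\overline{C})=\bigcap_{t\in T}(t\overline{C}\cap\overline{C})=\bigcap_{v\in W_T}v\overline{C}.$$
   Context: An isometry $r$ of a geodesic space $X$ is a reflection if $r^2=\mathrm{id}$, the fixed-point set $F_r$ (the wall of $r$) has empty interior, $X\setminus F_r$ has exactly two convex connected components, and $r$ interchanges them. A reflection group is an isometry group generated by reflections. Let $W$ be a reflection group of $X$ acting properly (i.e. $\{\gamma\in W: \gamma x\in B(x,N)\}$ is finite for all $x\in X$, $N>0$), and $R$ the set of all reflections of $X$ lying in $W$. A chamber is a connected component $C$ of $X\setminus\bigcup_{r\in R}F_r$. $W$ is a cocompact discrete reflection group if $\overline{C}$ is compact and $\{\gamma\in W: \gamma C=C\}=\{1\}$. For $r\in R$, $X_r^+$ denotes the component of $X\setminus F_r$ containing $C$. $S\subset R$ is minimal with $C=\bigcap_{s\in S}X_s^+$; then $(W,S)$ is a Coxeter system, and $\ell$ is word length with respect to $S$. For $T\subset S$, $W_T$ is the subgroup generated by $T$. *)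

(* Defs.v *)
From mathcomp Require Import all_boot all_order all_algebra.
From mathcomp Require Import boolp classical_sets cardinality reals.
Set Implicit Arguments. Unset Strict Implicit. Unset Printing Implicit Defensive.
Import Order.TTheory GRing.Theory Num.Theory.
Local Open Scope classical_set_scope.
Local Open Scope ring_scope.

Section Geometry.
Context {R : realType} {X : Type} (d : X -> X -> R).

Definition is_metric : Prop :=
  [/\ (forall x y, 0 <= d x y), (forall x y, d x y = 0 <-> x = y),
      (forall x y, d x y = d y x) & (forall x y z, d x z <= d x y + d y z)].

Definition mball (x : X) (e : R) : set X := [set y | d x y < e].

Definition mopen (U : set X) : Prop :=
  forall x, U x -> exists2 e, 0 < e & mball x e `<=` U.

Definition mclosure (A : set X) : set X :=
  [set x | forall e, 0 < e -> exists y, A y /\ mball x e y].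

Definition mcompact (K : set X) : Prop :=
  forall F : set (set X), (forall U, F U -> mopen U) ->
    K `<=` \bigcup_(U in F) U ->
    exists G : set (set X), [/\ G `<=` F, finite_set G & K `<=` \bigcup_(U in G) U].

Definition mconnected (A : set X) : Prop :=
  forall U V, mopen U -> mopen V -> A `<=` U `|` V ->
    A `&` U `&` V = set0 -> A `&` U = set0 \/ A `&` V = set0.

Definition mcomponent (Y C : set X) : Prop :=
  [/\ C `<=` Y, C !=set0, mconnected C &
      forall D, mconnected D -> C `<=` D -> D `<=` Y -> D = C].

Definition geodesic (g : R -> X) (x y : X) : Prop :=
  [/\ g 0 = x, g (d x y) = y &
      forall s t, 0 <= s <= d x y -> 0 <= t <= d x y -> d (g s) (g t) = `|s - t|].

Definition geodesic_space : Prop := forall x y, exists g, geodesic g x y.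

Definition mconvex (A : set X) : Prop :=
  forall x y, A x -> A y ->
    (exists g, geodesic g x y) /\
    forall g, geodesic g x y -> forall t, 0 <= t <= d x y -> A (g t).

Definition edist (a b : R * R) : R :=
  Num.sqrt ((a.1 - b.1) ^+ 2 + (a.2 - b.2) ^+ 2).

(** CAT(0) inequality for geodesic triangles: triangle with vertices p i,
    side g i a geodesic from p i to p (i+1 mod 3), comparison triangle p'. *)
Definition CAT0 : Prop :=
  [/\ is_metric, geodesic_space &
    forall (p : 'I_3 -> X) (g : 'I_3 -> R -> X) (p' : 'I_3 -> R * R),
      (forall i, geodesic (g i) (p i) (p (ordS i))) ->
      (forall i, edist (p' i) (p' (ordS i)) = d (p i) (p (ordS i))) ->
      let L i := d (p i) (p (ordS i)) in
      let cmp i s := ((p' i).1 + s / L i * ((p' (ordS i)).1 - (p' i).1),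
                      (p' i).2 + s / L i * ((p' (ordS i)).2 - (p' i).2)) in
      forall i j s t, 0 <= s <= L i -> 0 <= t <= L j ->
        d (g i s) (g j t) <= edist (cmp i s) (cmp j t)].

Definition isometry (f : X -> X) : Prop :=
  bijective f /\ forall x y, d (f x) (f y) = d x y.

Definition fixpts (r : X -> X) : set X := [set x | r x = x].

Definition reflection (r : X -> X) : Prop :=
  [/\ isometry r, r \o r = id,
      (forall x e, 0 < e -> ~ (mball x e `<=` fixpts r)) &
      exists A B : set X,
        [/\ A <> B, (forall D, mcomponent (~` fixpts r) D <-> D = A \/ D = B),
            mconvex A, mconvex B & r @` A = B]].

Definition prod_list (s : seq (X -> X)) : X -> X := foldr (fun f g => f \o g) id s.

Definition all_in (P : set (X -> X)) (s : seq (X -> X)) : Prop :=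
  forall i, (i < size s)%N -> P (nth id s i).

Definition gen_letter (T : set (X -> X)) (a : X -> X) : Prop :=
  exists2 t, T t & (a = t \/ (a \o t = id /\ t \o a = id)).

Definition generated (T : set (X -> X)) : set (X -> X) :=
  [set w | exists s, all_in (gen_letter T) s /\ prod_list s = w].

Definition isometry_group (W : set (X -> X)) : Prop :=
  [/\ (forall w, W w -> isometry w), W id,
      (forall u v, W u -> W v -> W (u \o v)) &
      (forall w, W w -> exists2 v, W v & v \o w = id /\ w \o v = id)].

Definition reflections_in (W : set (X -> X)) : set (X -> X) :=
  [set r | W r /\ reflection r].

Definition reflection_group (W : set (X -> X)) : Prop :=
  isometry_group W /\ W = generated (reflections_in W).

Definition acts_properly (W : set (X -> X)) : Prop :=
  forall x N, 0 < N -> finite_set [set g | W g /\ mball x N (g x)].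

Definition chamber (W : set (X -> X)) (C : set X) : Prop :=
  mcomponent (~` \bigcup_(r in reflections_in W) fixpts r) C.

Definition cocompact_discrete (W : set (X -> X)) : Prop :=
  [/\ reflection_group W, acts_properly W &
      forall C, chamber W C ->
        mcompact (mclosure C) /\ [set g | W g /\ g @` C = C] = [set id]]. 

(** X_r^+ : the component of X \ F_r containing C *)
Definition halfspace (r : X -> X) (C : set X) : set X :=
  [set x | exists D, [/\ mcomponent (~` fixpts r) D, C `<=` D & D x]].

Definition minimal_wall_set (W : set (X -> X)) (C : set X) (S : set (X -> X)) : Prop :=
  [/\ S `<=` reflections_in W, C = \bigcap_(s in S) halfspace s C &
      forall S', S' `<=` S -> C = \bigcap_(s in S') halfspace s C -> S' = S].

Definition reduced_word (S : set (X -> X)) (w : X -> X) (s : seq (X -> X)) : Prop :=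
  [/\ all_in S s, prod_list s = w &
      forall t, all_in S t -> prod_list t = w -> (size s <= size t)%N].

Definition letters (s : seq (X -> X)) : set (X -> X) :=
  [set t | exists2 i, (i < size s)%N & t = nth id s i].

End Geometry.

(* Main.v *)
Require Import Defs.
From mathcomp Require Import all_boot all_order all_algebra.
From mathcomp Require Import boolp classical_sets cardinality reals.
From mathcomp Require Import lra zify.
Require Import Defs.
Set Implicit Arguments. Unset Strict Implicit. Unset Printing Implicit Defensive.
Import Order.TTheory GRing.Theory Num.Theory.
Local Open Scope classical_set_scope.
Local Open Scope ring_scope.

Section Lists.
Context {X : Type}.
Implicit Types (l : seq (X -> X)) (P : set (X -> X)).

Lemma prod_cat l1 l2 : prod_list (l1 ++ l2) = prod_list l1 \o prod_list l2.
Proof. by elim: l1 => [|a l1 IH] //=; rewrite IH. Qed.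

Lemma prod_rcons l a : prod_list (rcons l a) = prod_list l \o a.
Proof. by rewrite -cats1 prod_cat. Qed.

Lemma all_in_cons P a l : all_in P (a :: l) <-> P a /\ all_in P l.
Proof.
split.
  by move=> h; split; [apply: (h 0%N)|move=> i il; apply: (h i.+1)].
by move=> [Pa h] [|i] //= il; apply: h.
Qed.

Lemma all_in_take P l k : all_in P l -> all_in P (take k l).
Proof.
move=> h i; rewrite size_take => il.
have [ik isz] : (i < k)%N /\ (i < size l)%N.
  by move: il; case: (ltnP k (size l)) => kl il; split; lia.
by rewrite nth_take //; apply: h.
Qed.

Lemma all_in_drop P l k : all_in P l -> all_in P (drop k l).
Proof. by move=> h i; rewrite size_drop nth_drop => il; apply: h; lia. Qed.

Lemma all_in_cat P l1 l2 : all_in P l1 -> all_in P l2 -> all_in P (l1 ++ l2).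
Proof.
move=> h1 h2 i; rewrite size_cat nth_cat; case: ifP => il; first by move=> _; apply: h1.
by move=> h; apply: h2; move/negbT: il; rewrite -leqNgt => il; lia.
Qed.

Lemma prod_fix l x : (forall i, (i < size l)%N -> nth id l i x = x) -> prod_list l x = x.
Proof.
elim: l => [|a l IH] //= h; rewrite IH; first exact: (h 0%N).
by move=> i il; apply: (h i.+1).
Qed.

Lemma disc_step (Q : nat -> Prop) a b : (a <= b)%N -> Q a -> ~ Q b ->
  exists k, [/\ (a <= k)%N, (k < b)%N, Q k & ~ Q k.+1].
Proof.
elim: b => [|b IH] ab Qa nQb.
  by move: ab; rewrite leqn0 => /eqP ab; subst a.
case: (pselect (Q b)) => Qb.
  by exists b; split => //; move: ab; rewrite leq_eqVlt => /orP[/eqP e|//]; subst a.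
move: ab; rewrite leq_eqVlt => /orP[/eqP e|ab]; first by subst a.
have [k [ak kb Qk nQk]] := IH ab Qa Qb; exists k; split => //; exact: ltnW.
Qed.

End Lists.

Section Topo.
Context {R : realType} {X : Type} (d : X -> X -> R) (Hm : is_metric d).

Lemma d_ge0 x y : 0 <= d x y. Proof. by case: Hm. Qed.
Lemma d_sym x y : d x y = d y x. Proof. by case: Hm. Qed.
Lemma d_tri x y z : d x z <= d x y + d y z. Proof. by case: Hm. Qed.
Lemma d_eq0 x y : d x y = 0 <-> x = y. Proof. by case: Hm. Qed.
Lemma d_xx x : d x x = 0. Proof. by apply/d_eq0. Qed.

Lemma le0_eq (a : R) : (forall e, 0 < e -> a < e) -> a <= 0.
Proof.
move=> H; rewrite leNgt; apply/negP => a0.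
by have := H a a0; rewrite ltxx.
Qed.

Lemma I0 x y : (0:R) <= 0 <= d x y.
Proof. by apply/andP; split; [exact: lexx|exact: d_ge0]. Qed.
Lemma IL x y : (0:R) <= d x y <= d x y.
Proof. by apply/andP; split; [exact: d_ge0|exact: lexx]. Qed.

Lemma ball_open x e : mopen d (mball d x e).
Proof.
move=> y; rewrite /mball /= => xy; exists (e - d x y); first by rewrite subr_gt0.
move=> z /=; rewrite ltrBrDl => yz.
by apply: le_lt_trans (d_tri x y z) _.
Qed.

Lemma ball_center x e : 0 < e -> mball d x e x.
Proof. by rewrite /mball /= d_xx. Qed.

Lemma open_not_closure (U A : set X) y : mopen d U -> U y -> A `&` U = set0 ->
  ~ mclosure d A y.
Proof.
move=> oU Uy AU cl; have [e e0 sub] := oU y Uy.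
have [z [Az yz]] := cl e e0.
have : (A `&` U) z by split => //; exact: sub.
by rewrite AU.
Qed.

Lemma fix_closed (r : X -> X) y : isometry d r -> mclosure d (fixpts r) y -> r y = y.
Proof.
move=> [_ ri] cl; apply/esym/d_eq0; apply/le_anti; rewrite d_ge0 andbT.
apply: le0_eq => e e0.
have e20 : 0 < e / 2 by rewrite divr_gt0.
have [f [rf yf]] := cl _ e20.
rewrite /fixpts /= in rf; rewrite /mball /= in yf.
have := d_tri y f (r y); rewrite -{2}rf ri d_sym => hb.
rewrite (d_sym f y) in hb.
apply: le_lt_trans hb _; rewrite [e]splitr ltrD //.
Qed.





Lemma conn_bigcup (F : set (set X)) x :
  (forall A, F A -> mconnected d A /\ A x) -> mconnected d (\bigcup_(A in F) A).
Proof.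
move=> HF U V oU oV cov disj.
case: (pselect (exists A, F A)) => [[A0 FA0]|nF]; last first.
  left; apply/seteqP; split => // z [[A FA _] _]; by case: nF; exists A.
have [_ A0x] := HF A0 FA0.
have sideA : forall A, F A -> (U x -> A `&` V = set0) /\ (V x -> A `&` U = set0).
  move=> A FA; have [cA Ax] := HF A FA.
  have sub : A `<=` U `|` V by move=> z Az; apply: cov; exists A.
  have dA : A `&` U `&` V = set0.
    apply/seteqP; split => // z [[Az Uz] Vz]; rewrite -disj; split => //; split => //; by exists A.
  case: (cA U V oU oV sub dA) => h; split => hx.
  - by have : (A `&` U) x by []; rewrite h.
  - by [].
  - by [].
  - by have : (A `&` V) x by []; rewrite h.
have [Ux|Vx] : U x \/ V x by apply: cov; exists A0.
  right; apply/seteqP; split => // z [[A FA Az] Vz].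
  by have : (A `&` V) z by []; rewrite (proj1 (sideA A FA) Ux).
left; apply/seteqP; split => // z [[A FA Az] Uz].
by have : (A `&` U) z by []; rewrite (proj2 (sideA A FA) Vx).
Qed.

Lemma conn_U2 (A B : set X) x : mconnected d A -> mconnected d B -> A x -> B x ->
  mconnected d (A `|` B).
Proof.
move=> cA cB Ax Bx.
have -> : A `|` B = \bigcup_(K in [set A; B]) K.
  apply/seteqP; split => z.
    by case=> h; [exists A => //; left|exists B => //; right].
  by case=> K [->|->] Kz; [left|right].
by apply: (conn_bigcup (x := x)) => K [->|->].
Qed.

Lemma conn1 x : mconnected d [set x].
Proof.
move=> U V _ _ cov disj.
case: (cov x (erefl x)) => h; [right|left]; apply/seteqP; split => // z [zx hz];
  rewrite /= in zx; subst z; rewrite -disj; by split.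
Qed.

Definition comp_of (Y : set X) x :=
  \bigcup_(A in [set A | [/\ mconnected d A, A `<=` Y & A x]]) A.

Lemma comp_ofP (Y : set X) x : Y x -> mcomponent d Y (comp_of Y x) /\ comp_of Y x x.
Proof.
move=> Yx.
have cx : comp_of Y x x by exists [set x] => //; split => //; [exact: conn1| move=> z ->].
have cc : mconnected d (comp_of Y x) by apply: (conn_bigcup (x := x)) => A [].
split => //; split => //.
- by move=> z [A [_ AY _] Az]; exact: AY.
- by exists x.
- move=> D cD sub DY; apply/seteqP; split => //.
  by move=> z Dz; exists D => //; split => //; exact: sub.
Qed.

Lemma comp_absorb (Y D K : set X) : mcomponent d Y D -> mconnected d K -> K `<=` Y ->
  (K `&` D) !=set0 -> K `<=` D.
Proof.
move=> [DY _ cD maxD] cK KY [z [Kz Dz]].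
have cKD : mconnected d (K `|` D) by apply: (conn_U2 (x := z)).
have e := maxD _ cKD (fun y h => or_intror h) (fun y => (fun h => match h with or_introl k => KY y k | or_intror k => DY y k end)).
by move=> y Ky; rewrite -e; left.
Qed.

Lemma comp_eq (Y D1 D2 : set X) : mcomponent d Y D1 -> mcomponent d Y D2 ->
  (D1 `&` D2) !=set0 -> D1 = D2.
Proof.
move=> h1 h2 [z [z1 z2]]; apply/seteqP; split.
- apply: (comp_absorb h2) => //; [by case: h1|by case: h1|by exists z].
- apply: (comp_absorb h1) => //; [by case: h2|by case: h2|by exists z].
Qed.


Definition seg (g : R -> X) (L : R) := g @` [set t | 0 <= t <= L].

Lemma geod_d (g : R -> X) x y t : geodesic d g x y -> 0 <= t <= d x y -> d x (g t) = t.
Proof.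
move=> [g0 _ gi] /andP[t0 tL]; rewrite -{1}g0 gi ?lexx ?d_ge0 ?t0 ?tL //.
by rewrite sub0r normrN ger0_norm.
Qed.

Lemma geod_relopen (g : R -> X) x y (U : set X) t : geodesic d g x y -> mopen d U ->
  0 <= t <= d x y -> U (g t) ->
  exists2 e, 0 < e & forall t', 0 <= t' <= d x y -> `|t - t'| < e -> U (g t').
Proof.
move=> [_ _ gi] oU tI Ut; have [e e0 sub] := oU _ Ut.
by exists e => // t' t'I tt'; apply: sub; rewrite /mball /= gi.
Qed.

Lemma seg_core (g : R -> X) x y (U V : set X) : geodesic d g x y -> mopen d U -> mopen d V ->
  (forall t, 0 <= t <= d x y -> U (g t) \/ V (g t)) ->
  (forall t, 0 <= t <= d x y -> U (g t) -> V (g t) -> False) ->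
  U (g 0) -> forall t1, 0 <= t1 <= d x y -> ~ V (g t1).
Proof.
move=> gg oU oV cov disj U0 t1 /andP[t10 t1L] Vt1.
set E := [set t | 0 <= t <= t1 /\ forall t', 0 <= t' <= t -> U (g t')].
have E0 : E 0.
  split; first by rewrite lexx t10.
  move=> t' /andP[a b]; have -> : t' = 0 by apply/le_anti; rewrite a b.
  exact: U0.
have ubE : ubound E t1 by move=> t [/andP[_ h] _].
have hsE : has_sup E by split; [exists 0|exists t1].
set sg := sup E.
have sg0 : 0 <= sg by apply: sup_upper_bound.
have sgt1 : sg <= t1 by apply: ge_sup => //; exists 0.
have sgI : 0 <= sg <= d x y by rewrite sg0 (le_trans sgt1 t1L).
have below : forall t', 0 <= t' < sg -> U (g t').
  move=> t' /andP[t'0 t'sg].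
  have sp : 0 < sg - t' by rewrite subr_gt0.
  have [tau Etau htau] := sup_adherent sp hsE.
  rewrite opprB addrC subrK in htau.
  by apply: (proj2 Etau); rewrite t'0 ltW.
case: (cov _ sgI) => [Usg|Vsg].
  have [e e0 he] := geod_relopen gg oU sgI Usg.
  have sglt : sg < t1.
    rewrite lt_neqAle sgt1 andbT; apply/negP => /eqP eq.
    by apply: (disj t1); [rewrite t10 t1L| rewrite -eq|].
  set tau := Num.min (sg + e / 2) t1.
  have Etau : E tau.
    split.
      by rewrite /tau ge_min lexx orbT andbT le_min t10 andbT (le_trans sg0) // lerDl divr_ge0 // ltW.
    move=> t' /andP[t'0 t'tau].
    have t'L : t' <= d x y by apply: le_trans t'tau _; rewrite ge_min t1L orbT.
    case: (ltP t' sg) => h; first by apply: below; rewrite t'0.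
    apply: he; first by rewrite t'0.
    rewrite distrC ger0_norm ?subr_ge0 // ltrBlDl.
    have tle : tau <= sg + e / 2 by rewrite ge_min lexx.
    apply: le_lt_trans (le_trans t'tau tle) _.
    by rewrite ltrD2l ltr_pdivrMr // ltr_pMr // ltr1n.
  have := sup_upper_bound hsE Etau; rewrite -/sg /tau.
  rewrite ge_min => /orP[]; last by rewrite leNgt sglt.
  by rewrite gerDl leNgt divr_gt0.
have [e e0 he] := geod_relopen gg oV sgI Vsg.
have [tau Etau htau] := sup_adherent e0 hsE.
have tauI : 0 <= tau <= d x y.
  by case: Etau => /andP[a b] _; rewrite a (le_trans b t1L).
apply: (disj tau tauI).
  by apply: (proj2 Etau); rewrite (proj1 (andP (proj1 Etau))) lexx.
apply: he => //; rewrite ger0_norm ?subr_ge0; last exact: sup_upper_bound.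
by rewrite ltrBlDl -ltrBlDr.
Qed.

Lemma seg_conn (g : R -> X) x y : geodesic d g x y -> mconnected d (seg g (d x y)).
Proof.
move=> gg U V oU oV cov dj.
have cov' : forall t, 0 <= t <= d x y -> U (g t) \/ V (g t).
  by move=> t tI; apply: cov; exists t.
have dj' : forall (A B : set X), A `&` B = (B `&` A) by move=> A B; rewrite setIC.
have disj : forall t, 0 <= t <= d x y -> U (g t) -> V (g t) -> False.
  move=> t tI Ut Vt; have : (seg g (d x y) `&` U `&` V) (g t) by split => //; split => //; exists t.
  by rewrite dj.
have I0 : (0:R) <= 0 <= d x y by rewrite lexx d_ge0.
case: (cov' 0 I0) => h0.
  right; apply/seteqP; split => // z [[t tI <-] Vt].
  exact: (seg_core gg oU oV cov' disj h0 tI Vt).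
left; apply/seteqP; split => // z [[t tI <-] Ut].
have cov2 : forall t, 0 <= t <= d x y -> V (g t) \/ U (g t).
  by move=> t' t'I; case: (cov' t' t'I); [right|left].
by apply: (seg_core gg oV oU cov2 _ h0 tI Ut) => t' t'I a b; exact: (disj t' t'I b a).
Qed.


Lemma ball_conn (Hg : geodesic_space d) x e : mconnected d (mball d x e).
Proof.
set F := [set K | exists y g, [/\ mball d x e y, geodesic d g x y & K = seg g (d x y)]].
have -> : mball d x e = \bigcup_(K in F) K.
  apply/seteqP; split => z.
    move=> xz; have [g gg] := Hg x z; exists (seg g (d x z)); first by exists z, g.
    exists (d x z); first by apply/andP; split; [exact: d_ge0|exact: lexx].
    by case: gg.
  move=> [K [y [g [xy gg ->]]]] [t tI <-].
  by rewrite /mball /= (geod_d gg tI); apply: le_lt_trans xy; case/andP: tI.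
apply: (conn_bigcup (x := x)) => K [y [g [xy gg ->]]]; split; first exact: seg_conn gg.
by exists 0; [apply/andP; split; [exact: lexx|exact: d_ge0]|case: gg].
Qed.

Lemma comp_open (Hg : geodesic_space d) (Y D : set X) : mopen d Y -> mcomponent d Y D -> mopen d D.
Proof.
move=> oY cD y Dy; have [DY _ _ _] := cD.
have [e e0 sub] := oY y (DY y Dy); exists e => //.
apply: (comp_absorb cD) => //; first exact: ball_conn.
by exists y; split => //; exact: ball_center.
Qed.

Lemma openC_fix (r : X -> X) : isometry d r -> mopen d (~` fixpts r).
Proof.
move=> [_ ri] y ny.
have dpos : 0 < d y (r y).
  rewrite lt_neqAle d_ge0 andbT; apply/eqP => /esym/d_eq0 h; apply: ny; by rewrite /fixpts /= -h.
exists (d y (r y) / 2); first by rewrite divr_gt0.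
move=> z yz rz; rewrite /mball /= in yz; rewrite /fixpts /= in rz.
have := d_tri y z (r y); rewrite -{2}rz ri (d_sym z y) => h.
have : d y (r y) < d y (r y) / 2 + d y (r y) / 2 by apply: le_lt_trans h _; rewrite ltrD.
by rewrite -splitr ltxx.
Qed.

Record sides (r : X -> X) (A B : set X) : Prop := Sides {
  sd_A : mcomponent d (~` fixpts r) A;
  sd_B : mcomponent d (~` fixpts r) B;
  sd_disj : A `&` B = set0;
  sd_cov : ~` fixpts r = A `|` B;
  sd_oA : mopen d A;
  sd_oB : mopen d B;
  sd_cA : mconvex d A;
  sd_cB : mconvex d B;
  sd_rA : r @` A = B;
  sd_rB : r @` B = A;
  sd_all : forall D, mcomponent d (~` fixpts r) D -> D = A \/ D = B }.

Lemma sides_sym r A B : sides r A B -> sides r B A.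
Proof.
case=> cA cB dj cv oA oB vA vB rA rB al; split => //; first by rewrite setIC.
  by rewrite setUC.
by move=> D /al [] ->; [right|left].
Qed.

Lemma image_inv (f : X -> X) (A : set X) : f \o f = id -> f @` (f @` A) = A.
Proof.
move=> ff; apply/seteqP; split => z.
  by move=> [_ [a Aa <-] <-]; have := congr1 (fun h => h a) ff => /= ->.
move=> Az; exists (f z); first by exists z.
by have := congr1 (fun h => h z) ff.
Qed.

Lemma refl_sides (Hg : geodesic_space d) r : reflection d r -> exists A B, sides r A B.
Proof.
move=> [iso rr _ [A [B [AB call cA cB rA]]]].
have compA : mcomponent d (~` fixpts r) A by apply/call; left.
have compB : mcomponent d (~` fixpts r) B by apply/call; right.
exists A, B; split => //.
- apply/seteqP; split => // z [Az Bz]; apply: AB; apply: comp_eq compA compB _.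
  by exists z.
- apply/seteqP; split => z; last first.
    by case=> h; [case: compA => + _ _ _; apply|case: compB => + _ _ _; apply].
  move=> nz; have [cz zz] := comp_ofP nz.
  by case/call: cz => e; [left|right]; rewrite -e.
- exact: comp_open (openC_fix iso) compA.
- exact: comp_open (openC_fix iso) compB.
- by rewrite -rA image_inv.
- by move=> D /call.
Qed.

Lemma sides_conn r A B (K : set X) : sides r A B -> mconnected d K -> K `<=` ~` fixpts r ->
  K !=set0 -> K `<=` A \/ K `<=` B.
Proof.
move=> sAB cK KF [k Kk].
have : (A `|` B) k by rewrite -(sd_cov sAB); apply: KF.
case=> h; [left; apply: (comp_absorb (sd_A sAB))|right; apply: (comp_absorb (sd_B sAB))];
  by [|exists k].
Qed.

Lemma sides_closure r A B (K : set X) y : sides r A B -> K `<=` A -> mclosure d K y ->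
  A y \/ fixpts r y.
Proof.
move=> sAB KA cl; case: (pselect (fixpts r y)) => h; first by right.
have : (A `|` B) y by rewrite -(sd_cov sAB).
case=> [Ay|By]; first by left.
exfalso; apply: (@open_not_closure B K y (sd_oB sAB) By _ cl).
apply/seteqP; split => // z [Kz Bz]; rewrite -(sd_disj sAB); split => //; exact: KA.
Qed.


Lemma sides_refl r A B : isometry d r -> r \o r = id ->
  (forall x e, 0 < e -> ~ (mball d x e `<=` fixpts r)) -> sides r A B -> reflection d r.
Proof.
move=> iso rr ei sAB; split => //; exists A, B; split.
- move=> AB; have [a Aa] : A !=set0 by case: (sd_A sAB).
  have : (A `&` B) a by split => //; rewrite -AB.
  by rewrite (sd_disj sAB).
- move=> D; split; first exact: sd_all.
  by case=> ->; [exact: sd_A sAB|exact: sd_B sAB].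
- exact: sd_cA sAB.
- exact: sd_cB sAB.
- exact: sd_rA sAB.
Qed.

Set Default Proof Using "All".
Section Transport.
Variables (g h : X -> X).
Hypotheses (gK : cancel g h) (hK : cancel h g) (gI : forall x y, d (g x) (g y) = d x y).

Lemma hI x y : d (h x) (h y) = d x y.
Proof. by rewrite -gI !hK. Qed.

Lemma imgP (A : set X) z : (g @` A) z <-> A (h z).
Proof.
split; first by move=> [a Aa <-]; rewrite gK.
by move=> Ah; exists (h z).
Qed.

Lemma imgP' (A : set X) z : (h @` A) z <-> A (g z).
Proof.
split; first by move=> [a Aa <-]; rewrite hK.
by move=> Ah; exists (g z).
Qed.

Lemma img_gh (A : set X) : g @` (h @` A) = A.
Proof.
apply/seteqP; split => z.
  by move/imgP/imgP'; rewrite hK.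
by move=> Az; apply/imgP/imgP'; rewrite hK.
Qed.

Lemma img_hg (A : set X) : h @` (g @` A) = A.
Proof.
apply/seteqP; split => z.
  by move/imgP'/imgP; rewrite gK.
by move=> Az; apply/imgP'/imgP; rewrite gK.
Qed.

Lemma img_setC (A : set X) : g @` (~` A) = ~` (g @` A).
Proof.
apply/seteqP; split => z.
  by move/imgP => nA /imgP.
by move=> nA; apply/imgP => Ah; apply: nA; apply/imgP.
Qed.

Lemma img_sub (A B : set X) : A `<=` B -> g @` A `<=` g @` B.
Proof. by move=> AB z /imgP /AB /imgP. Qed.

Lemma open_img (A : set X) : mopen d A -> mopen d (g @` A).
Proof.
move=> oA z /imgP Ahz; have [e e0 sub] := oA _ Ahz; exists e => // w zw.
apply/imgP; apply: sub; by rewrite /mball /= hI.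
Qed.

Lemma open_img' (A : set X) : mopen d A -> mopen d (h @` A).
Proof.
move=> oA z /imgP' Ahz; have [e e0 sub] := oA _ Ahz; exists e => // w zw.
apply/imgP'; apply: sub; by rewrite /mball /= gI.
Qed.

Lemma conn_img (A : set X) : mconnected d A -> mconnected d (g @` A).
Proof.
move=> cA U V oU oV cov dj.
have cov' : A `<=` (h @` U) `|` (h @` V).
  move=> a Aa; case: (cov (g a)); first by exists a.
    by move=> ?; left; apply/imgP'.
  by move=> ?; right; apply/imgP'.
have dj' : A `&` (h @` U) `&` (h @` V) = set0.
  apply/seteqP; split => // a [[Aa /imgP' Ua] /imgP' Va].
  have : (g @` A `&` U `&` V) (g a) by split => //; split => //; exists a.
  by rewrite dj.
case: (cA _ _ (open_img' oU) (open_img' oV) cov' dj') => e; [left|right];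
  apply/seteqP; split => // z [/imgP Az hz].
- have : (A `&` h @` U) (h z) by split => //; apply/imgP'; rewrite hK.
  by rewrite e.
- have : (A `&` h @` V) (h z) by split => //; apply/imgP'; rewrite hK.
  by rewrite e.
Qed.
Lemma geod_img (c : R -> X) x y : geodesic d c x y -> geodesic d (g \o c) (g x) (g y).
Proof. by move=> [c0 c1 ci]; split; rewrite /= ?gI ?c0 ?c1 // => s t sI tI; rewrite gI ci. Qed.
End Transport.


Section Transport2.
Variables (g h : X -> X).
Hypotheses (gK : cancel g h) (hK : cancel h g) (gI : forall x y, d (g x) (g y) = d x y).
Let hI' := hI gK hK gI.

Lemma comp_img (Y D : set X) : mcomponent d Y D -> mcomponent d (g @` Y) (g @` D).
Proof.
move=> [DY [d0 Dd0] cD mx]; split.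
- exact: (img_sub gK hK gI).
- by exists (g d0), d0.
- exact: (conn_img gK hK gI).
- move=> D' cD' sub sub'.
  have e : h @` D' = D.
    apply: mx.
    + exact: (conn_img hK gK hI').
    + by move=> z Dz; apply/(imgP' gK hK gI); apply: sub; exists z.
    + by move=> z /(imgP' gK hK gI) /sub' /(imgP gK hK gI); rewrite gK.
  by rewrite -e (img_gh gK hK gI).
Qed.


Lemma convex_img (A : set X) : mconvex d A -> mconvex d (g @` A).
Proof.
move=> cA x y /(imgP gK hK gI) Ax /(imgP gK hK gI) Ay; have [[c gc] all] := cA _ _ Ax Ay.
split; first by exists (g \o c); move: (geod_img gK hK gI gc); rewrite !hK.
move=> c' gc' t tI; apply/(imgP gK hK gI).
have gc2 := geod_img hK gK hI' gc'.
apply: (all _ gc2); by rewrite hI'.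
Qed.

Lemma closure_img (A : set X) : g @` mclosure d A `<=` mclosure d (g @` A).
Proof.
move=> z [y cl <-] e e0; have [a [Aa ya]] := cl e e0.
by exists (g a); split; [exists a|rewrite /mball /= gI].
Qed.

Lemma fix_conj (r : X -> X) : fixpts (g \o r \o h) = g @` fixpts r.
Proof.
apply/seteqP; split => z; rewrite /fixpts /=.
  by move=> e; apply/(imgP gK hK gI); rewrite /= -{2}e gK.
by move/(imgP gK hK gI); rewrite /= => ->; rewrite hK.
Qed.

Lemma img_comp (r : X -> X) (A : set X) : (g \o r \o h) @` (g @` A) = g @` (r @` A).
Proof.
apply/seteqP; split => z.
  by move=> [_ [a Aa <-] <-]; exists (r a); [exists a|rewrite /= gK].
by move=> [_ [a Aa <-] <-]; exists (g a); [exists a|rewrite /= gK].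
Qed.

End Transport2.

Section Transport3.
Variables (g h : X -> X).
Hypotheses (gK : cancel g h) (hK : cancel h g) (gI : forall x y, d (g x) (g y) = d x y).
Let hI' := hI gK hK gI.

Lemma sides_conj r A B : sides r A B -> sides (g \o r \o h) (g @` A) (g @` B).
Proof.
move=> sAB.
have eC : ~` fixpts (g \o r \o h) = g @` (~` fixpts r) by rewrite (fix_conj gK hK gI) -(img_setC gK hK gI).
split.
- rewrite eC; exact: (comp_img gK hK gI) (sd_A sAB).
- rewrite eC; exact: (comp_img gK hK gI) (sd_B sAB).
- apply/seteqP; split => // z [/(imgP gK hK gI) a /(imgP gK hK gI) b].
  by have : (A `&` B) (h z) by []; rewrite (sd_disj sAB).
- apply/seteqP; split => z.
    rewrite eC => /(imgP gK hK gI); rewrite (sd_cov sAB) => -[a|b];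
      [left|right]; exact/(imgP gK hK gI).
  rewrite eC => hz; apply/(imgP gK hK gI); rewrite (sd_cov sAB).
  by case: hz => /(imgP gK hK gI); [left|right].
- exact: (open_img gK hK gI) (sd_oA sAB).
- exact: (open_img gK hK gI) (sd_oB sAB).
- exact: (convex_img gK hK gI) (sd_cA sAB).
- exact: (convex_img gK hK gI) (sd_cB sAB).
- by rewrite (img_comp gK hK gI) (sd_rA sAB).
- by rewrite (img_comp gK hK gI) (sd_rB sAB).
- move=> D; rewrite eC => cD.
  have := (comp_img hK gK hI') _ _ cD; rewrite (img_hg gK hK gI) => /(sd_all sAB) [] e;
    [left|right]; by rewrite -e (img_gh gK hK gI).
Qed.

Lemma refl_conj (Hg : geodesic_space d) r : reflection d r -> reflection d (g \o r \o h).
Proof.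
move=> rf; have [A [B sAB]] := refl_sides Hg rf.
case: rf => [[_ ri] rr ei _].
have rrx : forall x, r (r x) = x by move=> x; have := congr1 (fun f => f x) rr.
apply: (sides_refl (A := g @` A) (B := g @` B)); last exact: sides_conj.
- split; last by move=> x y; rewrite /= gI ri hI'.
  by exists (g \o r \o h) => x; rewrite /= gK rrx hK.
- by apply: funext => x; rewrite /= gK rrx hK.
- move=> x e e0 sub; apply: (ei (h x) e e0) => y hy.
  have : fixpts (g \o r \o h) (g y) by apply: sub; rewrite /mball /= -(hK x) gI.
  by rewrite /fixpts /= gK => /(congr1 h); rewrite !gK.
Qed.

End Transport3.


Section Main.
Variables (W : set (X -> X)) (C : set X) (S : set (X -> X)).
Hypotheses (HC : CAT0 d) (HW : cocompact_discrete d W) (HCh : chamber d W C)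
  (HS : minimal_wall_set d W C S).

Let Hg : geodesic_space d. Proof. by case: HC. Qed.

Let isoW g : W g -> isometry d g.
Proof. by case: HW => -[[iso _ _ _] _] _ _; apply: iso. Qed.

Let WI g : W g -> forall x y, d (g x) (g y) = d x y.
Proof. by move=> /isoW []. Qed.

Let invW g : W g -> exists h, [/\ W h, cancel g h & cancel h g].
Proof.
case: HW => -[[_ _ _ inv] _] _ _ Wg; have [h Wh [e1 e2]] := inv g Wg.
by exists h; split => // x; [move: (congr1 (fun f => f x) e1)|move: (congr1 (fun f => f x) e2)].
Qed.

Let Wcomp u v : W u -> W v -> W (u \o v).
Proof. by case: HW => -[[_ _ c _] _] _ _; apply: c. Qed.

Let Wid : W id.
Proof. by case: HW => -[[_ i _ _] _] _ _. Qed.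

Let SR t : S t -> reflections_in d W t.
Proof. by case: HS => sub _ _; apply: sub. Qed.

Definition Zw := \bigcup_(r in reflections_in d W) fixpts r.

Lemma Zw_img g y : W g -> Zw y -> Zw (g y).
Proof.
move=> Wg [r [Wr rr] ry]; have [h [Wh gK hK]] := invW Wg.
exists (g \o r \o h); last by rewrite /fixpts /= gK ry.
split; first by apply: Wcomp => //; apply: Wcomp.
exact: (@refl_conj g h gK hK (WI Wg) Hg r rr).
Qed.

Lemma ZwC_img g : W g -> g @` (~` Zw) = ~` Zw.
Proof.
move=> Wg; have [h [Wh gK hK]] := invW Wg.
apply/seteqP; split => z.
  by move=> [a na <-] /(Zw_img Wh); rewrite gK.
move=> nz; exists (h z); last by rewrite hK.
by move=> /(Zw_img Wg); rewrite hK.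
Qed.

Lemma chamber_img g C' : W g -> chamber d W C' -> chamber d W (g @` C').
Proof.
move=> Wg cC; have [h [Wh gK hK]] := invW Wg.
rewrite /chamber -(ZwC_img Wg); exact: (comp_img gK hK (WI Wg)).
Qed.

Lemma chamber_meet C1 C2 : chamber d W C1 -> chamber d W C2 -> (C1 `&` C2) !=set0 -> C1 = C2.
Proof. exact: comp_eq. Qed.

Lemma stab g : W g -> (g @` C `&` C) !=set0 -> g = id.
Proof.
move=> Wg ne; have e := chamber_meet (chamber_img Wg HCh) HCh ne.
case: HW => _ _ /(_ C HCh) [_ st].
have : [set g | W g /\ g @` C = C] g by split.
by rewrite st.
Qed.

Lemma chamber_avoid C' r : chamber d W C' -> reflections_in d W r -> C' `<=` ~` fixpts r.
Proof. by move=> [CZ _ _ _] Rr z /CZ nz fz; apply: nz; exists r. Qed.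

Lemma chamber_side C' r A B : chamber d W C' -> reflections_in d W r -> sides r A B ->
  C' `<=` A \/ C' `<=` B.
Proof.
move=> cC Rr sAB; apply: sides_conn sAB _ _ _; [by case: cC|exact: chamber_avoid|by case: cC].
Qed.

Lemma halfS t : S t -> exists A B, [/\ sides t A B, C `<=` A & halfspace d t C = A].
Proof.
move=> St; have [Wt Rt] := SR St; have [A [B sAB]] := refl_sides Hg Rt.
have CH : C `<=` halfspace d t C.
  by case: HS => _ e _ z Cz; move: Cz; rewrite {1}e => /(_ t St).
have [c Cc] : C !=set0 by case: HCh.
case: (chamber_side HCh (SR St) sAB) => CA.
  exists A, B; split => //; apply/seteqP; split => z; last by move=> Az; exists A; split => //; exact: sd_A sAB.
  move=> [D [cD CD Dz]]; have <- // : D = A; apply: comp_eq cD (sd_A sAB) _; exists c; split; [exact: CD|exact: CA].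
exists B, A; split => //; first exact: sides_sym.
apply/seteqP; split => z; last by move=> Bz; exists B; split => //; exact: sd_B sAB.
move=> [D [cD CD Dz]]; have <- // : D = B; apply: comp_eq cD (sd_B sAB) _; exists c; split; [exact: CD|exact: CA].
Qed.


Lemma list_min (T : eqType) (P : T -> R -> Prop) (l : seq T) :
  (forall a (e e' : R), P a e -> 0 < e' <= e -> P a e') ->
  (forall a, a \in l -> exists2 e : R, 0 < e & P a e) ->
  exists2 e : R, 0 < e & forall a, a \in l -> P a e.
Proof.
move=> mono; elim: l => [|a l IH] h; first by exists 1.
have [ea ea0 Pa] := h a (mem_head _ _).
have [el el0 Pl] := IH (fun b bl => h b (ltac:(by rewrite in_cons bl orbT))).
exists (Num.min ea el); first by rewrite lt_min ea0.
move=> b; rewrite in_cons => /orP[/eqP ->|bl].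
  by apply: (mono _ ea _ Pa); rewrite lt_min ea0 el0 ge_min lexx.
by apply: (mono _ el _ (Pl b bl)); rewrite lt_min ea0 el0 ge_min lexx orbT.
Qed.

Lemma ball_sub p e e' : e' <= e -> mball d p e' `<=` mball d p e.
Proof. by move=> h z; rewrite /mball /= => lt; apply: lt_le_trans lt h. Qed.

Lemma locfin p (T : set (X -> X)) (H : (X -> X) -> set X) :
  T `<=` reflections_in d W ->
  (forall t, T t -> mcomponent d (~` fixpts t) (H t) /\ H t p) ->
  exists2 e, 0 < e & forall t, T t -> mball d p e `<=` H t.
Proof.
move=> TR TH.
have fin : finite_set [set g | W g /\ mball d p 1 (g p)].
  by case: HW => _ pr _; apply: pr.
have [l el] := (@finite_seqP {classic (X -> X)} _).1 fin.
have hl : forall a : {classic (X -> X)}, a \in l ->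
    exists2 e : R, 0 < e & (T a -> mball d p e `<=` H a).
  move=> a _; case: (pselect (T a)) => Ta; last by exists 1 => // /Ta.
  have [cH Hp] := TH a Ta; have [Wa ra] := TR a Ta.
  have oH : mopen d (H a) by case: ra => iso _ _ _; exact: (comp_open Hg (openC_fix iso) cH).
  have [e e0 sub] := oH p Hp; by exists e.
have [e e0 he] := @list_min {classic (X -> X)}
   (fun a e => T a -> mball d p e `<=` H a) l
   (fun a e e' h h' Ta => subset_trans (ball_sub (proj2 (andP h'))) (h Ta)) hl.
exists (Num.min e (1/2)).
  by rewrite lt_min e0 divr_gt0 ?ltr01 ?ltr0n.
move=> t Tt.
case: (pselect ([set g | W g /\ mball d p 1 (g p)] t)) => Ft.
  apply: subset_trans (he t _ Tt); first by apply: ball_sub; rewrite ge_min lexx.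
  by move: Ft; rewrite el.
have [Wt rt] := TR t Tt.
have [cH Hp] := TH t Tt.
apply: (comp_absorb cH); first exact: ball_conn.
  move=> z pz tz.
  apply: Ft; split => //; rewrite /mball /=.
  have := d_tri p z (t p); rewrite -{2}tz (WI Wt) (d_sym z p) => h1.
  apply: le_lt_trans h1 _.
  have pz2 : d p z < 1/2 by apply: lt_le_trans pz _; rewrite ge_min lexx orbT.
  by rewrite [1]splitr ltrD.
by exists p; split => //; apply: ball_center; rewrite lt_min e0 divr_gt0 ?ltr01 ?ltr0n.
Qed.


Lemma cross (F P : set X) (c : R -> X) x y : mcomponent d (~` F) P -> P x -> ~ P y ->
  geodesic d c x y -> exists2 tau, 0 <= tau <= d x y & F (c tau).
Proof.
move=> cP Px nPy gc; apply: contrapT => nex.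
have sub : seg c (d x y) `<=` ~` F.
  by move=> z [tau tI <-] Fz; apply: nex; exists tau.
have : seg c (d x y) `<=` P.
  apply: (comp_absorb cP) => //; first exact: seg_conn gc.
  exists x; split => //; exists 0; first exact: I0.
  by case: gc.
apply: contra_not nPy => /(_ y); apply; exists (d x y); first exact: IL.
by case: gc.
Qed.

Lemma halfS_conv s : S s -> mconvex d (halfspace d s C).
Proof. by move=> /halfS [A [B [sAB _ ->]]]; exact: sd_cA sAB. Qed.

Lemma halfS_comp s : S s -> mcomponent d (~` fixpts s) (halfspace d s C).
Proof. by move=> /halfS [A [B [sAB _ ->]]]; exact: sd_A sAB. Qed.

Lemma halfS_C s : S s -> C `<=` halfspace d s C.
Proof. by move=> /halfS [A [B [sAB CA ->]]]. Qed.

Lemma C_half z : (forall s, S s -> halfspace d s C z) -> C z.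
Proof. by case: HS => _ e _ h; rewrite e => s Ss; apply: h. Qed.

Lemma refl_inv r x : reflection d r -> r (r x) = x.
Proof. by case=> _ rr _ _; have := congr1 (fun f => f x) rr. Qed.

Lemma adj t r P Q : S t -> reflections_in d W r -> sides r P Q -> C `<=` P ->
  t @` C `<=` Q -> r = t.
Proof.
move=> St [Wr rr] sPQ CP tCQ.
have [Wt rt] := SR St.
have [Ht [Ht' [sT CHt eHt]]] := halfS St.
have tI := WI Wt; have rI := WI Wr.
have [y [hy nHy]] : exists y, (forall s, (S `\ t) s -> halfspace d s C y) /\ ~ Ht y.
  apply: contrapT => nex.
  case: HS => _ eC mn.
  have e' : C = \bigcap_(s in S `\ t) halfspace d s C.
    apply/seteqP; split.
      by move=> z Cz s [Ss _]; apply: halfS_C.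
    move=> z hz; apply: C_half => s Ss.
    case: (pselect (s = t)) => [->|nst]; last by apply: hz.
    rewrite eHt; apply: contrapT => nH; apply: nex; exists z; split; last exact: nH.
    exact: hz.
  have := mn _ (@subDsetl _ S [set t]) e'.
  move/seteqP => [_ h]; have := h t St; by case => _ /(_ erefl).
have [c Cc] : C !=set0 by case: HCh.
have [gam gg] := Hg c y.
have [tau tauI Fp] := cross (sd_A sT) (CHt _ Cc) nHy gg.
set p := gam tau.
have Hp : forall s, (S `\ t) s -> halfspace d s C p.
  move=> s Ss; have [_ all] := halfS_conv (proj1 Ss) (halfS_C (proj1 Ss) Cc) (hy s Ss).
  exact: all gg tau tauI.
have [eps eps0 heps] := @locfin p (S `\ t) (fun s => halfspace d s C)
   (fun s Ss => SR (proj1 Ss)) (fun s Ss => conj (halfS_comp (proj1 Ss)) (Hp s Ss)).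
have UC : forall z, d p z < eps -> Ht z -> C z.
  move=> z pz Hz; apply: C_half => s Ss.
  case: (pselect (s = t)) => [->|nst]; first by rewrite eHt.
  by apply: (heps s); [split => //; apply/nesym|].
have tp : t p = p by [].
have near : forall del, 0 < del -> del <= eps -> exists q, C q /\ d p q < del.
  move=> del del0 deps.
  have [_ _ ei _] := rt.
  have [z pz tz] : exists2 z, mball d p del z & ~ fixpts t z.
    apply: contrapT => nex; apply: (ei p del del0) => z pz; apply: contrapT => nz.
    by apply: nex; exists z.
  have : (Ht `|` Ht') z by rewrite -(sd_cov sT).
  case=> hz.
    exists z; split; last by [].
    by apply: UC => //; apply: lt_le_trans pz deps.
  have Htz : Ht (t z) by rewrite -(sd_rB sT); exists z.
  have ptz : d p (t z) = d p z by rewrite -{1}tp tI.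
  exists (t z); split; last by rewrite ptz.
  by apply: UC => //; rewrite ptz; apply: lt_le_trans pz deps.
have rp : r p = p.
  have [iso _ _ _] := rr.
  apply: fix_closed iso _ => e e0.
  have del0 : 0 < Num.min (e / 3) eps by rewrite lt_min eps0 divr_gt0 ?ltr0n.
  have [q [Cq pq]] := near _ del0 (ltac:(by rewrite ge_min lexx orbT)).
  have Pq : P q := CP q Cq.
  have Qtq : Q (t q) by apply: tCQ; exists q.
  have nPtq : ~ P (t q).
    by move=> Ptq; have : (P `&` Q) (t q) by []; rewrite (sd_disj sPQ).
  have [gam' gg'] := Hg q (t q).
  have [tau' tauI' Ff] := cross (sd_A sPQ) Pq nPtq gg'.
  exists (gam' tau'); split => //; rewrite /mball /=.
  have h1 := d_tri p q (gam' tau').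
  have h2 : d q (gam' tau') = tau' by apply: geod_d gg' tauI'.
  have h3 : tau' <= d q (t q) by case/andP: tauI'.
  have h4 := d_tri q p (t q).
  have h5 : d p (t q) = d p q by rewrite -{1}tp tI.
  have h6 : d q p = d p q by rewrite d_sym.
  have h8 : Num.min (e / 3) eps <= e / 3 by rewrite ge_min lexx.
  have h7 := lt_le_trans pq h8.
  lra.
have [q0 [Cq0 pq0]] := near eps eps0 (lexx _).
have Hq0 : Ht q0 := CHt _ Cq0.
have [e1 e10 sub1] := sd_oA sT Hq0.
have e00 : 0 < Num.min (eps - d p q0) e1 by rewrite lt_min e10 subr_gt0 pq0.
set e0 := Num.min (eps - d p q0) e1.
have ballC : forall z, d q0 z < e0 -> C z.
  move=> z qz; apply: UC.
    have := d_tri p q0 z; have : e0 <= eps - d p q0 by rewrite ge_min lexx.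
    move=> h h'; lra.
  apply: sub1; rewrite /mball /=; apply: lt_le_trans qz _; by rewrite ge_min lexx orbT.
have [z zb nz] : exists2 z, mball d (r q0) e0 z & ~ fixpts t z.
  have [_ _ ei _] := rt.
  apply: contrapT => nex; apply: (ei (r q0) e0 e00) => w hw; apply: contrapT => nw.
  by apply: nex; exists w.
set q' := r z.
have zq' : r q' = z by rewrite /q' refl_inv.
have hq' : d q0 q' < e0 by rewrite -(rI q0 q') zq'; exact: zb.
have Cq' : C q' by apply: ballC.
have pz : d p z < eps.
  rewrite -zq' -{1}rp rI.
  have := d_tri p q0 q'; have : e0 <= eps - d p q0 by rewrite ge_min lexx.
  move=> h h'; lra.
have nHz : ~ Ht z.
  move=> Hz; have Pz : P z by apply: CP; apply: UC.
  have Qz : Q z by rewrite -(sd_rA sPQ) -zq'; exists q' => //; apply: CP.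
  have : (P `&` Q) z by [].
  by rewrite (sd_disj sPQ).
have Hz' : Ht' z.
  have : (Ht `|` Ht') z by rewrite -(sd_cov sT).
  by case.
have Ctz : C (t z).
  apply: UC; first by rewrite -{1}tp tI.
  by rewrite -(sd_rB sT); exists z.
have e : t \o r = id.
  apply: stab; first exact: Wcomp.
  by exists (t z); split => //; exists q' => //=; rewrite zq'.
apply: funext => x; have hx : t (r x) = x by have := congr1 (fun f => f x) e.
by rewrite -{2}hx refl_inv.
Qed.




Lemma Wprod l : all_in S l -> W (prod_list l).
Proof.
elim: l => [|a l IH] //= /all_in_cons [Sa al].
by apply: Wcomp; [exact: (proj1 (SR Sa))|exact: IH].
Qed.

Lemma coreK s ss x : all_in S (s :: ss) ->
  (forall t', all_in S t' -> prod_list t' = prod_list (s :: ss) -> (size (s :: ss) <= size t')%N) ->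
  mclosure d C x -> (prod_list (s :: ss) @` mclosure d C) x -> s x = x.
Proof.
set L := s :: ss => aL red clx wx.
have St : S s := proj1 ((all_in_cons _ _ _).1 aL).
have [Wt rt] := SR St.
have [Ht [Ht' [sT CHt eHt]]] := halfS St.
apply: contrapT => nfx.
have Hx : Ht x by case: (sides_closure sT CHt clx).
set w := prod_list L.
have Ww : W w := Wprod aL.
have disj : forall z, Ht z -> Ht' z -> False.
  by move=> z a b; have : (Ht `&` Ht') z by []; rewrite (sd_disj sT).
have wCH : w @` C `<=` Ht.
  case: (chamber_side (chamber_img Ww HCh) (SR St) sT) => // wCH'.
  have [h [Wh wK hK]] := invW Ww.
  have := closure_img wK hK (WI Ww) wx.
  by move=> /(sides_closure (sides_sym sT) wCH') [/(disj _ Hx)|].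
set u := fun i => prod_list (take i L).
set Pm := fun i => u i @` C `<=` Ht'.
have nL : size L = (size ss).+1 by [].
have Pm1 : Pm 1%N.
  by move=> z [c Cc <-]; rewrite -(sd_rA sT); exists c; [exact: CHt|rewrite /u /L /= take0].
have [c0 Cc0] : C !=set0 by case: HCh.
have nPmn : ~ Pm (size L).
  move=> h; have : ((u (size L)) @` C) (w c0) by exists c0 => //; rewrite /u take_size.
  by move/h => h'; apply: (disj _ _ h'); apply: wCH; exists c0.
have [k [k1 kn Pk nPk]] := disc_step (leq_trans (ltn0Sn _) (leqnn _)) Pm1 nPmn.
have aTk : forall i, W (u i) by move=> i; apply: Wprod; apply: all_in_take.
have tkS : S (nth id L k) by apply: aL.
set tk := nth id L k.
have knL : (k < size L)%N := kn.
have uk1 : u k.+1 = u k \o tk by rewrite /u (take_nth id knL) prod_rcons.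
have side1 : u k.+1 @` C `<=` Ht.
  case: (chamber_side (chamber_img (aTk k.+1) HCh) (SR St) sT) => // h; by exfalso.
have [h [Wh uK hK]] := invW (aTk k).
have sr := sides_conj hK uK (WI Wh) (sides_sym sT).
have Rr : reflections_in d W (h \o s \o u k).
  split; first by apply: Wcomp => //; apply: Wcomp.
  exact: (refl_conj hK uK (WI Wh) Hg rt).
have h1 : C `<=` h @` Ht'.
  by move=> c Cc; apply/(imgP hK uK (WI Wh)); apply: Pk; exists c.
have h2 : tk @` C `<=` h @` Ht.
  move=> z [c Cc <-]; apply/(imgP hK uK (WI Wh)); apply: side1; exists c => //.
  by rewrite uk1.
have e := adj tkS Rr sr h1 h2.
have eq1 : forall y, s (u k y) = u k.+1 y.
  move=> y; rewrite uk1 /= /tk -e /= hK //.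
have [k' ek] : exists k', k = k'.+1 by case: (k) k1 => // k' _; exists k'.
rewrite ek in eq1 kn.
have eq2 : forall y, prod_list (take k' ss) y = u k'.+2 y.
  move=> y; rewrite -eq1 /u /L /= refl_inv //.
set t' := take k' ss ++ drop k'.+2 L.
have at' : all_in S t'.
  apply: all_in_cat; last exact: all_in_drop.
  by apply: all_in_take; case/all_in_cons: aL.
have pt' : prod_list t' = prod_list L.
  rewrite /t' prod_cat -{2}(cat_take_drop k'.+2 L) prod_cat.
  by apply: funext => y /=; rewrite eq2.
have := red t' at' pt'.
rewrite /t' size_cat size_take size_drop /L /=.
move: kn; rewrite /L /=; case: (ltnP k' (size ss)) => h' kn; lia.
Qed.



Lemma letters_fix ss x : all_in S ss ->
  (forall t', all_in S t' -> prod_list t' = prod_list ss -> (size ss <= size t')%N) ->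
  mclosure d C x -> (prod_list ss @` mclosure d C) x ->
  forall i, (i < size ss)%N -> nth id ss i x = x.
Proof.
elim: ss => [|s ss IH] // aL red clx wx.
have sx := coreK aL red clx wx.
have [Ss aL'] := (all_in_cons _ _ _).1 aL.
have [_ rs] := SR Ss.
have wx' : (prod_list ss @` mclosure d C) x.
  case: wx => c clc /= e; exists c => //; by rewrite -sx -e refl_inv.
have red' : forall t', all_in S t' -> prod_list t' = prod_list ss -> (size ss <= size t')%N.
  move=> t' at' pt'; have := red (s :: t'); rewrite /= pt' ltnS; apply => //.
  by apply/all_in_cons.
by case=> [|i] //= il; apply: IH.
Qed.

Lemma fixS t x : S t -> mclosure d C x -> (t @` mclosure d C) x -> t x = x.
Proof.
move=> St clx [y cly ey].
have [Wt rt] := SR St.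
have [Ht [Ht' [sT CHt eHt]]] := halfS St.
case: (sides_closure sT CHt cly) => [Hy|Fy]; last by rewrite -ey Fy.
have Hx' : Ht' x by rewrite -(sd_rA sT) -ey; exists y.
case: (sides_closure sT CHt clx) => // Hx.
by have : (Ht `&` Ht') x by []; rewrite (sd_disj sT).
Qed.

Lemma main_eq w ss : W w -> reduced_word S w ss ->
  [/\ mclosure d C `&` (w @` mclosure d C)
        = mclosure d C `&` \bigcap_(t in letters ss) fixpts t,
      mclosure d C `&` \bigcap_(t in letters ss) fixpts t
        = mclosure d C `&` \bigcap_(t in letters ss) (t @` mclosure d C) &
      mclosure d C `&` \bigcap_(t in letters ss) (t @` mclosure d C)
        = \bigcap_(v in generated (letters ss)) (v @` mclosure d C)].
Proof.
move=> Ww [aS pw red]; rewrite -pw in red.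
have eq2 : mclosure d C `&` \bigcap_(t in letters ss) fixpts t
        = mclosure d C `&` \bigcap_(t in letters ss) (t @` mclosure d C).
  apply/seteqP; split => x [clx h]; split => // t lt.
    by exists x => //; apply: h.
  case: lt => i il ->; apply: fixS; [exact: aS|by []|].
  by apply: h; exists i.
split => //.
- apply/seteqP; split => x [clx h]; split => //.
    move=> t [i il ->]; apply: (letters_fix aS red clx _ il); by rewrite pw.
  exists x => //; rewrite -pw; apply: prod_fix => i il; apply: h; by exists i.
- rewrite -eq2; apply/seteqP; split => x.
    move=> [clx h] v [l [al <-]]; exists x => //.
    apply: prod_fix => i il; have [t lt [->|[e1 _]]] := al i il; first exact: h.
    by rewrite -{1}(h t lt); exact: (congr1 (fun f => f x) e1).
  move=> h.
  have clx : mclosure d C x.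
    have : (id @` mclosure d C) x by apply: h; exists [::]; split.
    by case=> y cly <-.
  split => // t [i il et].
  have : (t @` mclosure d C) x.
    apply: h; exists [:: t]; split => //.
    move=> [|j] //= _; exists t; [by exists i|by left].
  move=> tx; rewrite /fixpts /=; apply: fixS => //; rewrite et; exact: aS.
Qed.


End Main.

End Topo.

Theorem lemma3p1 (R : realType) (X : Type) (d : X -> X -> R)
  (W : set (X -> X)) (C : set X) (S : set (X -> X)) (w : X -> X) (s : seq (X -> X)) :
  CAT0 d -> cocompact_discrete d W -> chamber d W C -> minimal_wall_set d W C S ->
  W w -> reduced_word S w s ->
  [/\ mclosure d C `&` (w @` mclosure d C)
        = mclosure d C `&` \bigcap_(t in letters s) fixpts t,
      mclosure d C `&` \bigcap_(t in letters s) fixpts t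
        = mclosure d C `&` \bigcap_(t in letters s) (t @` mclosure d C) &
      mclosure d C `&` \bigcap_(t in letters s) (t @` mclosure d C)
        = \bigcap_(v in generated (letters s)) (v @` mclosure d C)].
Proof.
move=> HC HW HCh HS Ww rw.
have Hm : is_metric d by case: HC.
exact: (main_eq Hm HC HW HCh HS Ww rw).
Qed.
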